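(* Let $A$ be a finite alphabet with $|A|=n$ and $L\subseteq A^*$. Then for every $m\in\mathbb N$ the tuple $(m,\dots,m)$ is componentwise dominated by the Parikh image of some word of $L$ if and only if there is an enumeration $b_1,\dots,b_n$ of $A$ such that $b_1^*b_2^*\cdots b_n^*\subseteq \downarrow L$.
   Context: The Parikh image of $w$ is the vector of the numbers of occurrences of each symbol of $A$ in $w$ (in a fixed order). $\downarrow L=\{u\mid \exists v\in L,\ u \text{ is a subsequence of } v\}$ is the downward closure of $L$. *)

(* Defs.v *)
From mathcomp Require Import all_boot.
Set Implicit Arguments. Unset Strict Implicit. Unset Printing Implicit Defensive.

(* Parikh image of w over the finite alphabet A: the vector a |-> |w|_a
   (indexed by the letters of A instead of by a fixed order). *)
Definition parikh (A : finType) (w : seq A) : A -> nat := fun a => count_mem a w.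

Definition dclosure (A : finType) (L : seq A -> Prop) (u : seq A) : Prop :=
  exists2 v, L v & subseq u v.

(* u belongs to b_1^* b_2^* ... b_k^*  where bs = [:: b_1; ...; b_k]. *)
Definition star_prod (A : eqType) (bs : seq A) (u : seq A) : Prop :=
  exists2 ks : seq nat, size ks = size bs &
    u = flatten [seq nseq kb.2 kb.1 | kb <- zip bs ks].

(* Main.v *)
Require Import Defs.
From mathcomp Require Import all_boot.
From mathcomp Require Import zify.
From Stdlib Require Import Classical.

Lemma nseq_sub (A : eqType) (b : A) p m : m <= count_mem b p -> subseq (nseq m b) p.
Proof.
elim: p m => [|x p IH] [|m] //= H; try by rewrite sub0seq.
case: (eqVneq b x) H => [e|ne] H.
  subst x; apply: IH; move: H; rewrite ?eqxx /=; lia.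
exact: (IH m.+1 H).
Qed.

Lemma greedy (A : eqType) m k : forall (S w : seq A), size S = k -> uniq S ->
  (forall c, c \in S -> m * k <= count_mem c w) ->
  exists2 bs, perm_eq bs S & subseq (flatten [seq nseq m b | b <- bs]) w.
Proof.
elim: k => [|k IH] S w.
  by move=> /size0nil -> _ _; exists [::] => //; rewrite sub0seq.
move=> sz uS Hc.
case: S sz uS Hc => [//|b0 S0] sz uS Hc.
set S := b0 :: S0 in uS Hc *.
have ex : exists i, has (fun c => m <= count_mem c (take i w)) S.
  exists (size w); apply/hasP; exists b0; first by rewrite inE eqxx.
  rewrite take_size; have := Hc b0 (mem_head _ _); rewrite mulnS; lia.
case: (ex_minnP ex) => i /hasP [b bS Hb] imin.
have bound : forall c, c \in S -> count_mem c (take i w) <= m.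
  move=> c cS; case: i imin Hb => [|j] imin Hb; first by rewrite take0.
  have hj : ~~ has (fun c => m <= count_mem c (take j w)) S.
    apply/negP => /imin; lia.
  move/hasPn: hj => /(_ c cS); rewrite -ltnNge => lt.
  rewrite -addn1 takeD count_cat.
  have := count_size (pred1 c) (take 1 (drop j w)); rewrite size_take_min.
  have := geq_minl 1 (size (drop j w)); lia.
have h1 : size (rem b S) = k by rewrite size_rem // sz.
have h2 : uniq (rem b S) by exact: rem_uniq.
have h3 : forall c, c \in rem b S -> m * k <= count_mem c (drop i w).
  move=> c cS'; have cS : c \in S by apply: (mem_rem cS').
  have := Hc c cS; rewrite -{1}(cat_take_drop i w) count_cat mulnS.
  have := bound c cS; lia.
have [bs' pbs' sbs'] := IH _ _ h1 h2 h3.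
exists (b :: bs').
  by rewrite (permPr (perm_to_rem bS)) perm_cons.
rewrite /= -(cat_take_drop i w); apply: cat_subseq => //.
exact: nseq_sub.
Qed.

Definition good (A : finType) (L : seq A -> Prop) (bs : seq A) m :=
  exists2 w, L w & subseq (flatten [seq nseq m b | b <- bs]) w.
Arguments good {A}.

Lemma flat_mono (A : eqType) (bs : seq A) m M : m <= M ->
  subseq (flatten [seq nseq m b | b <- bs]) (flatten [seq nseq M b | b <- bs]).
Proof.
move=> le; elim: bs => [|b bs IH] //=; apply: cat_subseq => //.
apply: nseq_sub; rewrite count_nseq /= eqxx mul1n //.
Qed.

Lemma star_sub (A : eqType) (bs : seq A) ks M : size ks = size bs ->
  (forall k, k \in ks -> k <= M) ->
  subseq (flatten [seq nseq kb.2 kb.1 | kb <- zip bs ks])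
         (flatten [seq nseq M b | b <- bs]).
Proof.
elim: bs ks => [|b bs IH] [|k ks] //= [e] H.
apply: cat_subseq.
  apply: nseq_sub; rewrite count_nseq /= eqxx mul1n; apply: H; exact: mem_head.
apply: IH => // x xk; apply: H; by rewrite inE xk orbT.
Qed.

Lemma star_nseq (A : eqType) (bs : seq A) m :
  flatten [seq nseq kb.2 kb.1 | kb <- zip bs (nseq (size bs) m)] =
  flatten [seq nseq m b | b <- bs].
Proof. by elim: bs => //= b bs ->. Qed.

Lemma count_flat (A : eqType) (bs : seq A) m a :
  count_mem a (flatten [seq nseq m b | b <- bs]) = m * count_mem a bs.
Proof.
elim: bs => [|b bs IH] /=; first by rewrite muln0.
by rewrite count_cat IH count_nseq /= mulnDr mulnC.
Qed.

Lemma bound_list (T : eqType) (P : T -> nat -> Prop) (s : seq T) :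
  (forall x, x \in s -> exists M, forall m, M <= m -> ~ P x m) ->
  exists M, forall x, x \in s -> forall m, M <= m -> ~ P x m.
Proof.
elim: s => [|x s IH] H; first by exists 0.
have [M1 H1] := H x (mem_head _ _).
have [M2 H2] := IH (fun y hy => H y (@mem_behead _ (x :: s) y hy)).
exists (maxn M1 M2) => y; rewrite inE => /orP[/eqP->|hy] m hm.
  apply: H1; move: hm; rewrite geq_max => /andP[]//.
apply: H2 => //; move: hm; rewrite geq_max => /andP[]//.
Qed.

Theorem mainTheorem7 (A : finType) (L : seq A -> Prop) :
  (forall m : nat, exists2 w, L w & forall a : A, m <= parikh w a)
  <->
  (exists2 bs : seq A, perm_eq bs (enum A) &
     forall u : seq A, star_prod bs u -> dclosure L u).
Proof.
split.
- move=> H.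
  have Hg : forall m, exists2 bs, perm_eq bs (enum A) & good L bs m.
    move=> m; have [w Lw Hw] := H (m * size (enum A)).
    have [bs pbs sbs] := @greedy A m _ (enum A) w erefl (enum_uniq _)
      (fun c _ => Hw c).
    by exists bs => //; exists w.
  have [bs [bsP Hbs]] : exists bs, bs \in permutations (enum A) /\
      forall M, exists2 m, M <= m & good L bs m.
    apply: NNPP => Hn.
    have Hb : forall x, x \in (permutations (enum A)) ->
        exists M, forall m, M <= m -> ~ good L x m.
      move=> x Hx; apply: NNPP => Hx'; apply: Hn; exists x; split.
        by [].
      move=> M; apply: NNPP => HM; apply: Hx'; exists M => m hm g.
      by apply: HM; exists m.
    have [M HM] := bound_list _ _ _ Hb.
    have [bs pbs g] := Hg M.
    apply: (HM bs) g => //.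
    by rewrite mem_permutations.
  exists bs; first by rewrite -mem_permutations.
  move=> u [ks sks ->].
  have [m hm [w Lw sw]] := Hbs (sumn ks).
  exists w => //; apply: (subseq_trans _ sw).
  apply: (subseq_trans _ (@flat_mono _ bs _ _ hm)).
  apply: star_sub => // k kk.
  clear -kk.
  elim: ks kk => [|k' ks IH] //=; rewrite inE => /orP[/eqP->|/IH]; lia.
- move=> [bs pbs Hbs] m.
  have st : star_prod bs (flatten [seq nseq m b | b <- bs]).
    exists (nseq (size bs) m); first by rewrite size_nseq.
    by rewrite star_nseq.
  have [v Lv sv] := Hbs _ st.
  exists v => // a; rewrite /parikh.
  apply: leq_trans (leq_count_subseq _ sv).
  rewrite count_flat (permP pbs) count_uniq_mem ?enum_uniq // mem_enum muln1 //.
Qed.
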